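(* Let $M$ be a finite monoid. The map sending a two-sided idempotent ideal $I$ of $M$ to the set of $\mathfrak I$-classes of idempotents lying in $I$ is a bijection $\mathscr{II}(M)\to\mathsf{Open}(\mathsf{Idem}_{\mathfrak I}(M))$, where $\mathsf{Idem}_{\mathfrak I}(M)$ carries the order topology of the order $\le_{\mathfrak I}$. Via $\mathsf F_M\cong\mathsf{Idem}_{\mathfrak I}(M)$ this gives a bijection between $\mathscr{II}(M)$ (hence between localising subcategories of the topos of right $M$-sets) and the open subsets of $\mathsf F_M$.
   Context: A two-sided ideal $I$ (possibly empty) is idempotent if $I=I^2=\{xy\mid x,y\in I\}$; $\mathscr{II}(M)$ is the set of these. For idempotents $e,f$: $e\,\mathfrak I\,f$ iff $MeM=MfM$, and $\mathsf{Idem}_{\mathfrak I}(M)$ is the set of $\mathfrak I$-classes of idempotents, partially ordered by $[e]\le_{\mathfrak I}[f]$ iff $MeM\subseteq MfM$. For a poset $P$, the order topology has as open sets the subsets $S\subseteq P$ such that $y\in S$ and $x\le y$ imply $x\in S$; $\mathsf{Open}(P)$ is the set of open subsets. $\mathsf F_M$ is the set of isomorphism classes of points of the topos of right $M$-sets, which is in bijection with $\mathsf{Idem}_{\mathfrak I}(M)$ via $[Me]\leftrightarrow[e]$. *)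

(* Defs.v *)
From mathcomp Require Import all_boot.
Set Implicit Arguments. Unset Strict Implicit. Unset Printing Implicit Defensive.

(* A finite monoid is given by a finType T, a multiplication mul and a unit;
   the monoid axioms are hypotheses of the theorem. *)
Section FinMonoidDefs.
Variables (T : finType) (mul : T -> T -> T).

Definition idem (e : T) : bool := mul e e == e.

Definition pideal (e : T) : {set T} := [set mul (mul m e) n | m : T, n : T].

(* two-sided ideal (possibly empty): M I ⊆ I and I M ⊆ I *)
Definition is_ideal (I : {set T}) : Prop :=
  forall m x, x \in I -> mul m x \in I /\ mul x m \in I.

Definition sqset (I : {set T}) : {set T} := [set mul x y | x in I, y in I].

Definition idem_ideal (I : {set T}) : Prop := is_ideal I /\ I = sqset I.

Definition Jclass (e : T) : {set T} := [set f | idem f && (pideal f == pideal e)].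

Definition IdemJ : {set {set T}} := [set Jclass e | e in [set e | idem e]].

Definition leJ (C D : {set T}) : Prop :=
  exists e f, [/\ idem e, idem f, C = Jclass e, D = Jclass f & pideal e \subset pideal f].

(* open sets of the order (Alexandrov) topology: down-closed subsets *)
Definition is_open (S : {set {set T}}) : Prop :=
  S \subset IdemJ /\
  forall C D, D \in S -> C \in IdemJ -> leJ C D -> C \in S.

Definition idem_classes (I : {set T}) : {set {set T}} :=
  [set Jclass e | e in [set e in I | idem e]].

End FinMonoidDefs.

(* Main.v *)
Require Import Defs.
From mathcomp Require Import all_boot zify.
Set Implicit Arguments. Unset Strict Implicit. Unset Printing Implicit Defensive.

Lemma pow_add (T : Type) (mul : T -> T -> T)
  (mulA : forall x y z, mul x (mul y z) = mul (mul x y) z) (s : T) a b :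
  iter (a + b).+1 (mul s) s = mul (iter a (mul s) s) (iter b (mul s) s).
Proof.
elim: a => [|a IH] //. rewrite addSn /=.
by rewrite -mulA -IH.
Qed.

Lemma idem_pow (T : finType) (mul : T -> T -> T)
  (mulA : forall x y z, mul x (mul y z) = mul (mul x y) z) (s : T) :
  exists k, idem mul (iter k (mul s) s).
Proof.
pose f := fun i : 'I_#|T|.+1 => iter i (mul s) s.
have : [exists i, exists j, (i != j) && (f i == f j)].
  case: (boolP [exists i, exists j, (i != j) && (f i == f j)]) => // /existsPn H; exfalso.
  have inj : injective f.
    move=> i j Hij; apply/eqP; apply/negPn/negP=> Hne.
    by move: (H i) => /existsPn /(_ j); rewrite Hne Hij eqxx.
  by move: (leq_card f inj); rewrite card_ord ltnn.
case/existsP=> i /existsP [j /andP [Hne /eqP Hf]].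
rewrite /f in Hf.
have [a [d [Hd Had]]] : exists a d, 0 < d /\ iter a (mul s) s = iter (a + d) (mul s) s.
  case: (ltngtP i j) Hne => [Hij _|Hij _|Hij]; last first.
  - by rewrite (val_inj Hij) eqxx.
  - exists j, (i - j); split; first by rewrite subn_gt0.
    rewrite subnKC; [exact: esym Hf | exact: ltnW].
  - exists i, (j - i); split; first by rewrite subn_gt0.
    rewrite subnKC; [exact: Hf | exact: ltnW].
have per : forall t q, iter (a + t) (mul s) s = iter (a + t + q * d) (mul s) s.
  move=> t q; elim: q => [|q IH]; first by rewrite mul0n addn0.
  rewrite IH mulSn.
  have -> : a + t + (d + q * d) = (t + q * d) + (a + d) by lia.
  rewrite [RHS]iterD -Had -iterD; congr iter; lia.
have [k hk] : exists k, k.+1 = a.+1 * d.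
  exists (a.+1 * d).-1; rewrite prednK //; by rewrite muln_gt0.
have ge : a <= k.
  have : a.+1 * 1 <= a.+1 * d by rewrite leq_mul2l.
  lia.
exists k; rewrite /idem -pow_add //; apply/eqP.
have E1 : (k + k).+1 = a + (k - a) + a.+1 * d by lia.
rewrite E1 -per; congr (iter _ (mul s) s); lia.
Qed.

Section Main.
Lemma pidealP (T : finType) (mul : T -> T -> T) e x :
  reflect (exists m n, x = mul (mul m e) n) (x \in pideal mul e).
Proof.
apply: (iffP imset2P) => [[m n _ _ ->]|[m [n ->]]]; first by exists m, n.
by exists m n.
Qed.

Lemma pideal_self (T : finType) (mul : T -> T -> T) one
  (mul1x : forall x, mul one x = x) (mulx1 : forall x, mul x one = x) e :
  e \in pideal mul e.
Proof. by apply/pidealP; exists one, one; rewrite mul1x mulx1. Qed.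

Lemma pideal_ideal (T : finType) (mul : T -> T -> T)
  (mulA : forall x y z, mul x (mul y z) = mul (mul x y) z) e :
  is_ideal mul (pideal mul e).
Proof.
move=> m x /pidealP [a [b ->]]; split; apply/pidealP.
- by exists (mul m a), b; rewrite !mulA.
- by exists a, (mul b m); rewrite !mulA.
Qed.

Lemma pideal_sub (T : finType) (mul : T -> T -> T) (I : {set T}) e :
  is_ideal mul I -> e \in I -> pideal mul e \subset I.
Proof.
move=> HI He; apply/subsetP => x /pidealP [m [n ->]].
case: (HI m e He) => H1 _; by case: (HI n _ H1).
Qed.

Lemma pideal_le (T : finType) (mul : T -> T -> T)
  (mulA : forall x y z, mul x (mul y z) = mul (mul x y) z) x e :
  x \in pideal mul e -> pideal mul x \subset pideal mul e.
Proof.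
move=> Hx; apply/subsetP => y /pidealP [m [n ->]].
case: (pideal_ideal mulA m Hx) => H1 _.
by case: (pideal_ideal mulA n H1).
Qed.

Lemma key (T : finType) (mul : T -> T -> T) (one : T)
  (mulA : forall x y z, mul x (mul y z) = mul (mul x y) z)
  (mul1x : forall x, mul one x = x) (mulx1 : forall x, mul x one = x) I x :
  idem_ideal mul I -> x \in I -> exists e, [/\ e \in I, idem mul e & x \in pideal mul e].
Proof.
case=> HI Hsq Hx.
pose P z := (z \in I) && [exists w, x == mul z w].
have Px : P x by rewrite /P Hx; apply/existsP; exists one; rewrite mulx1.
pose zM z := [set mul z m | m : T].
case: (arg_maxnP (fun z => #|zM z|) Px) => z /andP [Hz /existsP [w /eqP Hw]] Hmin.
have : z \in sqset mul I by rewrite -Hsq.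
case/imset2P => z' y' Hz' Hy' Ez.
have Pz' : P z'.
  by rewrite /P Hz'; apply/existsP; exists (mul y' w); rewrite Hw Ez mulA.
have sub : zM z \subset zM z'.
  apply/subsetP => u /imsetP [m _ ->]; apply/imsetP; exists (mul y' m) => //.
  by rewrite Ez mulA.
have eqM : zM z = zM z'.
  by apply/eqP; rewrite eqEcard sub; exact: Hmin.
have : z' \in zM z by rewrite eqM; apply/imsetP; exists one; rewrite ?mulx1.
case/imsetP => t _ Ez'.
pose s := mul t y'.
have Hs : s \in I by case: (HI t y' Hy').
have zs : z = mul z s by rewrite /s mulA -Ez' Ez.
have zp : forall n, z = mul z (iter n (mul s) s).
  elim => [|n IH] //=; by rewrite mulA -zs.
have Ip : forall n, iter n (mul s) s \in I.
  elim=> //= n IH; by case: (HI s _ IH).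
case: (idem_pow mulA s) => k Hk.
exists (iter k (mul s) s); split => //.
by apply/pidealP; exists z, w; rewrite -zp.
Qed.

Lemma inj_sub (T : finType) (mul : T -> T -> T) (one : T)
  (mulA : forall x y z, mul x (mul y z) = mul (mul x y) z)
  (mul1x : forall x, mul one x = x) (mulx1 : forall x, mul x one = x) I J :
  idem_ideal mul I -> idem_ideal mul J ->
  idem_classes mul I = idem_classes mul J -> I \subset J.
Proof.
move=> HI' [HJ HJs] EQ; apply/subsetP=> x Hx.
case: (key mulA mul1x mulx1 HI' Hx) => e [eI ide xe].
have : Jclass mul e \in idem_classes mul J.
  by rewrite -EQ; apply/imsetP; exists e => //; rewrite inE eI ide.
case/imsetP => f; rewrite inE => /andP [fJ idf] Ef.
have : e \in Jclass mul f by rewrite -Ef inE ide eqxx.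
rewrite inE => /andP [_ /eqP Ep].
have eJ : e \in J.
  by move: (pideal_self mul1x mulx1 e); rewrite Ep => /(subsetP (pideal_sub HJ fJ)).
exact: (subsetP (pideal_sub HJ eJ)).
Qed.
End Main.

Theorem proposition4p10 (T : finType) (mul : T -> T -> T) (one : T)
  (mulA : forall x y z, mul x (mul y z) = mul (mul x y) z)
  (mul1x : forall x, mul one x = x) (mulx1 : forall x, mul x one = x) :
  (forall I, idem_ideal mul I -> is_open mul (idem_classes mul I)) /\
  (forall I J, idem_ideal mul I -> idem_ideal mul J ->
     idem_classes mul I = idem_classes mul J -> I = J) /\
  (forall S, is_open mul S -> exists I, idem_ideal mul I /\ idem_classes mul I = S).
Proof.
split; [|split].
- move=> I [HI Hsq]; split.
  + apply/subsetP => C /imsetP [e]; rewrite inE => /andP [He Hid] ->.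
    by apply/imsetP; exists e => //; rewrite inE.
  + move=> C D /imsetP [e]; rewrite inE => /andP [He Hid] -> HC [e' [f' [He' Hf' EC ED Hsub]]].
    have : f' \in Jclass mul e by rewrite ED inE Hf' eqxx.
    rewrite inE => /andP [_ /eqP Epf].
    have e'I : e' \in I.
      move: (pideal_self mul1x mulx1 e') => /(subsetP Hsub).
      by rewrite Epf => /(subsetP (pideal_sub HI He)).
    by rewrite EC; apply/imsetP; exists e' => //; rewrite inE e'I.
- move=> I J HI HJ EQ; apply/eqP; rewrite eqEsubset.
  by rewrite (inj_sub mulA mul1x mulx1 HI HJ EQ) (inj_sub mulA mul1x mulx1 HJ HI (esym EQ)).
- move=> S [Ssub Sdown].
  exists [set x | [exists e, [&& idem mul e, Jclass mul e \in S & x \in pideal mul e]]].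
  split; first split.
  + move=> m x; rewrite !inE => /existsP [e /and3P [ie eS xe]].
    case: (pideal_ideal mulA m xe) => H1 H2.
    by split; apply/existsP; exists e; rewrite ie eS.
  + apply/eqP; rewrite eqEsubset; apply/andP; split; apply/subsetP.
    * move=> x; rewrite inE => /existsP [e /and3P [ie eS /pidealP [m [n ->]]]].
      apply/imset2P; exists (mul m e) (mul e n).
      -- rewrite inE; apply/existsP; exists e; rewrite ie eS /=.
         by apply/pidealP; exists m, one; rewrite mulx1.
      -- rewrite inE; apply/existsP; exists e; rewrite ie eS /=.
         by apply/pidealP; exists one, n; rewrite mul1x.
      -- by rewrite mulA -(mulA m e e) (eqP ie).
    * move=> u /imset2P [x y]; rewrite inE => /existsP [e /and3P [ie eS xe]] _ ->.
      case: (pideal_ideal mulA y xe) => _ H2.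
      by rewrite inE; apply/existsP; exists e; rewrite ie eS.
  + apply/eqP; rewrite eqEsubset; apply/andP; split; apply/subsetP.
    * move=> C /imsetP [e']; rewrite !inE => /andP [/existsP [e /and3P [ie eS e'e]] ide'] ->.
      apply: (Sdown _ (Jclass mul e)) => //.
      -- by apply/imsetP; exists e'; rewrite ?inE.
      -- by exists e', e; split => //; exact: pideal_le.
    * move=> C HC; case/imsetP: (subsetP Ssub C HC) => e; rewrite inE => ie EC.
      apply/imsetP; exists e => //; rewrite !inE ie andbT.
      apply/existsP; exists e; rewrite ie -EC HC.
      exact: (pideal_self mul1x mulx1).
Qed.
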